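(* Let $A$ be an evolution algebra with natural basis $B=\{e_i:i\in\Lambda\}$ and structure matrix $(\omega_{ki})$. Then $M$ is a maximal modular ideal of $A$ if and only if $M=\mathrm{lin}\{e_i:i\in\Lambda\setminus\{i_0\}\}$ for some modular index $i_0\in\Lambda$, in which case $\frac{1}{\omega_{i_0i_0}}e_{i_0}$ is a modular unit for $M$.
   Context: An evolution algebra is an algebra $A$ over $\mathbb{K}\in\{\mathbb{R},\mathbb{C}\}$ with a basis $\{e_i:i\in\Lambda\}$ (natural basis) with $e_ie_j=0$ for $i\neq j$; write $e_j^2=\sum_k\omega_{kj}e_k$. An ideal $M$ is modular if some $u\in A$ (modular unit) satisfies $a-au\in M$ for all $a\in A$; a maximal modular ideal is a proper modular ideal maximal among proper modular ideals. An index $i_0$ is a modular index if $\omega_{i_0i_0}\neq0$ and $\omega_{i_0j}=0$ for all $j\neq i_0$. *)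

(* Defs.v *)
From HB Require Import structures.
From mathcomp Require Import all_boot all_order all_algebra.
Set Implicit Arguments.
Unset Strict Implicit.
Unset Printing Implicit Defensive.
Import Order.TTheory GRing.Theory Num.Theory.
Local Open Scope ring_scope.

Section Evolution.
Variables (K : fieldType) (A : lmodType K) (mul : A -> A -> A).

Definition bilinear_mul : Prop :=
  (forall (k : K) (x y z : A), mul (k *: x + y) z = k *: mul x z + mul y z) /\
  (forall (k : K) (x y z : A), mul z (k *: x + y) = k *: mul z x + mul z y).

Variables (L : eqType) (e : L -> A) (w : L -> L -> K).

Definition spans : Prop :=
  forall a : A, exists (s : seq L) (c : L -> K), a = \sum_(i <- s) c i *: e i.

Definition lin_indep : Prop :=
  forall (s : seq L) (c : L -> K), uniq s ->
    \sum_(i <- s) c i *: e i = 0 -> forall i, i \in s -> c i = 0.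

Definition natural_basis : Prop :=
  [/\ spans, lin_indep & forall i j, i != j -> mul (e i) (e j) = 0].

Definition structure_matrix : Prop :=
  forall j, exists s : seq L,
    [/\ uniq s, (forall k, w k j != 0 -> k \in s) &
        mul (e j) (e j) = \sum_(k <- s) w k j *: e k].

Definition evolution_algebra : Prop :=
  [/\ bilinear_mul, natural_basis & structure_matrix].

Definition modular_index (i0 : L) : Prop :=
  w i0 i0 != 0 /\ forall j, j != i0 -> w i0 j = 0.

Definition lin_except (i0 : L) : A -> Prop := fun x =>
  exists (s : seq L) (c : L -> K),
    (forall i, i \in s -> i != i0) /\ x = \sum_(i <- s) c i *: e i.

End Evolution.

Section Ideals.
Variables (K : fieldType) (A : lmodType K) (mul : A -> A -> A).

Definition is_ideal (M : A -> Prop) : Prop :=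
  [/\ M 0, (forall x y, M x -> M y -> M (x + y)),
      (forall (k : K) x, M x -> M (k *: x)) &
      (forall a m, M m -> M (mul a m) /\ M (mul m a))].

Definition modular_unit (M : A -> Prop) (u : A) : Prop :=
  forall a : A, M (a - mul a u).

Definition modular_ideal (M : A -> Prop) : Prop :=
  is_ideal M /\ exists u, modular_unit M u.

Definition proper (M : A -> Prop) : Prop := exists a, ~ M a.

Definition maximal_modular_ideal (M : A -> Prop) : Prop :=
  [/\ modular_ideal M, proper M &
      forall N : A -> Prop, modular_ideal N -> proper N ->
        (forall x, M x -> N x) -> forall x, N x -> M x].

End Ideals.

(* Main.v *)
Require Import Defs.
From HB Require Import structures.
From mathcomp Require Import all_boot all_order all_algebra.
From Stdlib Require Import Classical.
Import GRing.Theory Num.Theory.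
Local Open Scope ring_scope.

Set Implicit Arguments.
Unset Strict Implicit.
Unset Printing Implicit Defensive.

Section Proof.
Variables (K : fieldType) (A : lmodType K) (mul : A -> A -> A)
  (L : eqType) (e : L -> A) (w : L -> L -> K).
Hypothesis HmL : forall (k : K) (x y z : A), mul (k *: x + y) z = k *: mul x z + mul y z.
Hypothesis HmR : forall (k : K) (x y z : A), mul z (k *: x + y) = k *: mul z x + mul z y.
Hypothesis Hsp : spans e.
Hypothesis Hli : lin_indep e.
Hypothesis Horth : forall i j, i != j -> mul (e i) (e j) = 0.
Hypothesis Hsm : structure_matrix mul e w.

Lemma mul0l z : mul 0 z = 0.
Proof.
have H := HmL 1 0 0 z; rewrite !scale1r addr0 in H.
by apply: (@addrI _ (mul 0 z)); rewrite addr0 -H.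
Qed.

Lemma mul0r z : mul z 0 = 0.
Proof.
have H := HmR 1 0 0 z; rewrite !scale1r addr0 in H.
by apply: (@addrI _ (mul z 0)); rewrite addr0 -H.
Qed.

Lemma mulDl x y z : mul (x + y) z = mul x z + mul y z.
Proof. by rewrite -[x in LHS]scale1r HmL scale1r. Qed.
Lemma mulDr x y z : mul z (x + y) = mul z x + mul z y.
Proof. by rewrite -[x in LHS]scale1r HmR scale1r. Qed.
Lemma mulZl k x z : mul (k *: x) z = k *: mul x z.
Proof. by rewrite -[k *: x]addr0 HmL mul0l addr0. Qed.
Lemma mulZr k x z : mul z (k *: x) = k *: mul z x.
Proof. by rewrite -[k *: x]addr0 HmR mul0r addr0. Qed.
Lemma mulBr x y z : mul z (x - y) = mul z x - mul z y.
Proof. by rewrite mulDr -scaleN1r mulZr scaleN1r. Qed.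

Lemma mul_suml (I : Type) (s : seq I) F z :
  mul (\sum_(i <- s) F i) z = \sum_(i <- s) mul (F i) z.
Proof.
elim: s => [|x s IH]; first by rewrite !big_nil mul0l.
by rewrite !big_cons mulDl IH.
Qed.

Lemma mul_sumr (I : Type) (s : seq I) F z :
  mul z (\sum_(i <- s) F i) = \sum_(i <- s) mul z (F i).
Proof.
elim: s => [|x s IH]; first by rewrite !big_nil mul0r.
by rewrite !big_cons mulDr IH.
Qed.

Lemma sum_count (c : L -> K) s t : uniq t -> {subset s <= t} ->
  \sum_(i <- s) c i *: e i = \sum_(i <- t) (c i *+ count_mem i s) *: e i.
Proof.
move=> ut; elim: s => [|x s IH] sub.
  by rewrite big_nil big1 // => i _; rewrite /= mulr0n scale0r.
rewrite big_cons IH; last by move=> y ys; apply: sub; rewrite inE ys orbT.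
have xt : x \in t by apply: sub; rewrite inE eqxx.
under [in RHS]eq_bigr => i _ do rewrite /= mulrnDr scalerDl.
rewrite big_split /=; congr (_ + _).
rewrite (big_rem x xt) /= eqxx mulr1n big1_seq ?addr0 // => i /andP[_ ir].
move: ir; rewrite (mem_rem_uniq _ ut) inE => /andP[ix _].
by rewrite eq_sym (negbTE ix) mulr0n scale0r.
Qed.

Lemma mul_e_l i a : exists r, mul (e i) a = r *: mul (e i) (e i).
Proof.
have [s [c ->]] := Hsp a.
exists (\sum_(k <- s | k == i) c k).
rewrite mul_sumr (bigID (pred1 i)) /= [X in _ + X]big1 => [|k ki].
  rewrite addr0 scaler_suml; apply: eq_bigr => k /eqP ->.
  by rewrite mulZr.
by rewrite mulZr Horth ?scaler0 // eq_sym.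
Qed.

Lemma mul_e_r i a : exists r, mul a (e i) = r *: mul (e i) (e i).
Proof.
have [s [c ->]] := Hsp a.
exists (\sum_(k <- s | k == i) c k).
rewrite mul_suml (bigID (pred1 i)) /= [X in _ + X]big1 => [|k ki].
  rewrite addr0 scaler_suml; apply: eq_bigr => k /eqP ->.
  by rewrite mulZl.
by rewrite mulZl Horth ?scaler0.
Qed.

Section J.
Variable j0 : L.
Notation LE := (lin_except e j0).

Lemma LE0 : LE 0.
Proof. by exists [::], (fun _ => 0); split => //; rewrite big_nil. Qed.

Lemma LED x y : LE x -> LE y -> LE (x + y).
Proof.
move=> [s1 [c1 [h1 ->]]] [s2 [c2 [h2 ->]]].
exists (undup (s1 ++ s2)),
  (fun i => c1 i *+ count_mem i s1 + c2 i *+ count_mem i s2); split.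
  by move=> i; rewrite mem_undup mem_cat => /orP[/h1|/h2].
have u := undup_uniq (s1 ++ s2).
rewrite (@sum_count c1 s1 _ u); last first.
  by move=> i hi; rewrite mem_undup mem_cat hi.
rewrite (@sum_count c2 s2 _ u); last first.
  by move=> i hi; rewrite mem_undup mem_cat hi orbT.
by rewrite -big_split; apply: eq_bigr => i _; rewrite scalerDl.
Qed.

Lemma LEZ k x : LE x -> LE (k *: x).
Proof.
move=> [s [c [h ->]]]; exists s, (fun i => k * c i); split => //.
by rewrite scaler_sumr; apply: eq_bigr => i _; rewrite scalerA.
Qed.

Lemma LEB x y : LE x -> LE y -> LE (x - y).
Proof. by move=> hx hy; apply: (LED) => //; rewrite -scaleN1r; apply: (LEZ). Qed.

Lemma LE_e i : i != j0 -> LE (e i).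
Proof.
move=> ij; exists [:: i], (fun _ => 1); split.
  by move=> k; rewrite inE => /eqP ->.
by rewrite big_seq1 scale1r.
Qed.

Lemma LE_sum (s : seq L) F : (forall i, i \in s -> LE (F i)) ->
  LE (\sum_(i <- s) F i).
Proof.
elim: s => [|x s IH] H; first by rewrite big_nil; exact: LE0.
rewrite big_cons; apply: (LED); first by apply: (H); rewrite inE eqxx.
by apply: (IH) => i hi; apply: (H); rewrite inE hi orbT.
Qed.

Lemma key c : LE (c *: e j0) -> c = 0.
Proof.
move=> [s [d [hs Heq]]].
have j0t : j0 \notin undup s.
  by rewrite mem_undup; apply/negP => /hs; rewrite eqxx.
pose f i := if i == j0 then c else - (d i *+ count_mem i s).
have := @Hli (j0 :: undup s) f.
rewrite /= j0t undup_uniq => /(_ isT).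
rewrite big_cons /f eqxx.
have -> : \sum_(i <- undup s) (if i == j0 then c else - (d i *+ count_mem i s)) *: e i
          = - \sum_(i <- undup s) (d i *+ count_mem i s) *: e i.
  rewrite -sumrN; apply: eq_big_seq => i hi.
  have : i != j0 by apply: contraNneq j0t => <-.
  by move/negbTE ->; rewrite scaleNr.
rewrite -sum_count ?undup_uniq //; last by move=> i; rewrite mem_undup.
rewrite -Heq subrr => /(_ erefl j0); rewrite inE eqxx /= => /(_ isT).
by [].
Qed.

Lemma nLE : ~ LE (e j0).
Proof.
move=> H; have := @key 1; rewrite scale1r => /(_ H)/eqP.
by rewrite oner_eq0.
Qed.

Lemma decomp x : exists C y, LE y /\ x = C *: e j0 + y.
Proof.
have [s [c ->]] := Hsp x.
exists (\sum_(i <- s | i == j0) c i), (\sum_(i <- s | i != j0) c i *: e i).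
split.
  exists [seq i <- s | i != j0], c; split.
    by move=> i; rewrite mem_filter => /andP[].
  by rewrite big_filter.
rewrite (bigID (pred1 j0)) /= scaler_suml; congr (_ + _).
by apply: eq_bigr => i /eqP ->.
Qed.

Lemma sq_decomp j : exists y, LE y /\ mul (e j) (e j) = w j0 j *: e j0 + y.
Proof.
have [s [us hs ->]] := Hsm j.
exists (\sum_(k <- s | k != j0) w k j *: e k); split.
  exists [seq i <- s | i != j0], (fun k => w k j); split.
    by move=> i; rewrite mem_filter => /andP[].
  by rewrite big_filter.
rewrite (bigID (pred1 j0)) /=; congr (_ + _).
case: (boolP (j0 \in s)) => hj.
  rewrite (big_rem j0 hj) /= eqxx big1_seq ?addr0 // => k /andP[kj kr].
  move: kr; rewrite (mem_rem_uniq _ us) inE => /andP[kj' _].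
  by rewrite kj in kj'.
have -> : w j0 j = 0.
  by apply/eqP; apply: contraNT hj; exact: hs.
rewrite scale0r big1_seq // => k /andP[/eqP -> hk].
by rewrite hk in hj.
Qed.

Lemma mul_LE y : LE y -> mul (e j0) y = 0 /\ mul y (e j0) = 0.
Proof.
move=> [s [c [hs ->]]]; rewrite mul_sumr mul_suml; split;
  apply: big1_seq => i /andP[_ hi].
  by rewrite mulZr Horth ?scaler0 // eq_sym hs.
by rewrite mulZl Horth ?scaler0 // hs.
Qed.

End J.

Lemma unit_lem (M : A -> Prop) i0 : w i0 i0 != 0 ->
  (forall x, M x <-> lin_except e i0 x) ->
  modular_unit mul M ((w i0 i0)^-1 *: e i0).
Proof.
move=> wn HM b; apply/HM.
have [C [y [hy ->]]] := decomp i0 b.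
have [y' [hy' hsq]] := sq_decomp i0 i0.
rewrite mulZr mulDl mulZl hsq (mul_LE hy).2 addr0.
suff -> : C *: e i0 + y - (w i0 i0)^-1 *: (C *: (w i0 i0 *: e i0 + y'))
          = y - ((w i0 i0)^-1 * C) *: y'.
  by apply: (LEB) => //; apply: (LEZ).
rewrite !scalerDr !scalerA mulrAC mulVf // mul1r.
by rewrite opprD addrA [C *: e i0 + y]addrC addrK.
Qed.

Lemma backward (M : A -> Prop) i0 : modular_index w i0 ->
  (forall x, M x <-> lin_except e i0 x) -> maximal_modular_ideal mul M.
Proof.
move=> [wn wz] HM.
have Lsq : forall i, i != i0 -> lin_except e i0 (mul (e i) (e i)).
  move=> i hi; have [y [hy ->]] := sq_decomp i0 i.
  by rewrite wz // scale0r add0r.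
split.
- split; last by exists ((w i0 i0)^-1 *: e i0); exact: unit_lem.
  split.
  + by apply/HM; exact: LE0.
  + by move=> x y /HM hx /HM hy; apply/HM; exact: LED.
  + by move=> k x /HM hx; apply/HM; exact: LEZ.
  + move=> b m /HM [s [c [hs ->]]]; split; apply/HM.
      rewrite mul_sumr; apply: LE_sum => i hi; rewrite mulZr; apply: (LEZ).
      have [r ->] := mul_e_r i b; apply: (LEZ); apply: (Lsq); exact: hs.
    rewrite mul_suml; apply: LE_sum => i hi; rewrite mulZl; apply: (LEZ).
    have [r ->] := mul_e_l i b; apply: (LEZ); apply: (Lsq); exact: hs.
- by exists (e i0) => /HM; exact: nLE.
- move=> N [[N0 ND NZ _] _] [b nb] MN x Nx; apply/HM.
  have [C [y [hy hx]]] := decomp i0 x.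
  have Ny : N y by apply: (MN); apply/HM.
  have NC : N (C *: e i0).
    by have := ND _ _ Nx (NZ (-1) _ Ny); rewrite scaleN1r hx addrK.
  case: (eqVneq C 0) => [C0|Cn0]; first by rewrite hx C0 scale0r add0r.
  exfalso; apply: nb.
  have Ne : N (e i0) by have := NZ C^-1 _ NC; rewrite scalerA mulVf // scale1r.
  have [C' [y' [hy' ->]]] := decomp i0 b.
  by apply: (ND); [apply: (NZ) | apply: (MN); apply/HM].
Qed.

Lemma forward (M : A -> Prop) : maximal_modular_ideal mul M ->
  exists i0, modular_index w i0 /\ (forall x, M x <-> lin_except e i0 x).
Proof.
case=> [[[M0 MD MZ Mm] [u Hu]] [a na] Hmax].
have MB : forall x y, M x -> M y -> M (x - y).
  by move=> x y hx hy; rewrite -scaleN1r; apply: (MD) => //; apply: (MZ).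
have Msum : forall (s : seq L) (c : L -> K), (forall i, i \in s -> M (e i)) ->
    M (\sum_(i <- s) c i *: e i).
  move=> s c; elim: s => [|x s IH] H; first by rewrite big_nil.
  rewrite big_cons; apply: (MD); first by apply: (MZ); apply: (H); rewrite inE eqxx.
  by apply: (IH) => i hi; apply: (H); rewrite inE hi orbT.
have [j0 nj0] : exists j0, ~ M (e j0).
  apply: (NNPP) => H; apply: na; have [s [c ->]] := Hsp a.
  apply: (Msum) => i _; apply: (NNPP) => hi; apply: (H); by exists i.
have Hr : forall j, exists r, M (e j - r *: mul (e j) (e j)).
  by move=> j; have [r hr] := mul_e_l j u; exists r; rewrite -hr; exact: Hu.
pose LE := lin_except e j0.
pose N x := exists m y, M m /\ LE y /\ x = m + y.
have MN : forall x, M x -> N x.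
  by move=> x hx; exists x, 0; split => //; split; [exact: LE0 | rewrite addr0].
have LEN : forall y, LE y -> N y.
  by move=> y hy; exists 0, y; split => //; split => //; rewrite add0r.
have N0 : N 0 by apply: (MN).
have ND : forall x y, N x -> N y -> N (x + y).
  move=> x y [m1 [y1 [h1 [k1 ->]]]] [m2 [y2 [h2 [k2 ->]]]].
  exists (m1 + m2), (y1 + y2); split; first exact: MD.
  by split; [exact: LED | rewrite addrACA].
have NZ : forall k x, N x -> N (k *: x).
  move=> k x [m1 [y1 [h1 [k1 ->]]]]; exists (k *: m1), (k *: y1).
  by split; [exact: MZ | split; [exact: LEZ | rewrite scalerDr]].
have Nsum : forall (s : seq L) F, (forall i, i \in s -> N (F i)) ->
    N (\sum_(i <- s) F i).
  move=> s F; elim: s => [|x s IH] H; first by rewrite big_nil.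
  rewrite big_cons; apply: (ND); first by apply: (H); rewrite inE eqxx.
  by apply: (IH) => i hi; apply: (H); rewrite inE hi orbT.
have Nsq : forall i, i != j0 -> N (mul (e i) (e i)).
  move=> i ij; have [r hr] := Hr i; case: (eqVneq r 0) => [r0|rn0].
    apply: (MN); move: hr; rewrite r0 scale0r subr0 => hi.
    exact: (Mm (e i) (e i) hi).1.
  exists (- r^-1 *: (e i - r *: mul (e i) (e i))), (r^-1 *: e i).
  split; first exact: MZ.
  split; first by apply: (LEZ); exact: LE_e.
  by rewrite scaleNr scalerBr scalerA mulVf // scale1r opprB subrK.
have NmL : forall b y, LE y -> N (mul b y) /\ N (mul y b).
  move=> b y [s [c [hs ->]]]; rewrite mul_sumr mul_suml; split;
    apply: (Nsum) => i hi.
    rewrite mulZr; apply: (NZ); have [r ->] := mul_e_r i b.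
    by apply: (NZ); apply: (Nsq); exact: hs.
  rewrite mulZl; apply: (NZ); have [r ->] := mul_e_l i b.
  by apply: (NZ); apply: (Nsq); exact: hs.
have Nid : modular_ideal mul N.
  split; last by exists u => b; apply: (MN); exact: Hu.
  split => //.
  move=> b x [m [y [hm [hy ->]]]]; rewrite mulDr mulDl; split; apply: (ND).
  - by apply: (MN); exact: (Mm b m hm).1.
  - exact: (NmL b y hy).1.
  - by apply: (MN); exact: (Mm b m hm).2.
  - exact: (NmL b y hy).2.
have Nprop : Defs.proper N.
  exists (e j0) => -[m [y [hm [hy he]]]].
  have hm' : m = e j0 - y by rewrite he addrK.
  have := (Mm (e j0) m hm).1; rewrite hm' mulBr (mul_LE hy).1 subr0 => hsq.
  have [r hr] := Hr j0; apply: nj0.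
  by have := MD _ _ hr (MZ r _ hsq); rewrite subrK.
have NM := Hmax N Nid Nprop MN.
have LEM : forall y, LE y -> M y by move=> y hy; apply: (NM); apply: (LEN).
have MLE : forall x, M x -> LE x.
  move=> x hx; have [C [y [hy hx']]] := decomp j0 x.
  have hC : M (C *: e j0) by have := MB _ _ hx (LEM _ hy); rewrite hx' addrK.
  case: (eqVneq C 0) => [C0|Cn0]; first by rewrite hx' C0 scale0r add0r.
  exfalso; apply: nj0; have := MZ C^-1 _ hC.
  by rewrite scalerA mulVf // scale1r.
exists j0; split; last by move=> x; split; [apply: (MLE) | apply: (LEM)].
split.
  have [r hr] := Hr j0; have [y [hy hsq]] := sq_decomp j0 j0.
  have := MLE _ hr; rewrite hsq => h.
  have : LE ((1 - r * w j0 j0) *: e j0).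
    suff -> : (1 - r * w j0 j0) *: e j0
              = e j0 - r *: (w j0 j0 *: e j0 + y) + r *: y.
      by apply: (LED) => //; apply: (LEZ).
    by rewrite scalerDr opprD addrA subrK scalerBl scale1r scalerA.
  move/key/eqP; rewrite subr_eq0 => /eqP h1.
  apply/eqP => w0; move: h1; rewrite w0 mulr0 => /eqP.
  by rewrite oner_eq0.
move=> j jj0; have hj : M (e j) := LEM _ (LE_e jj0).
have := MLE _ (Mm (e j) _ hj).1; have [y [hy ->]] := sq_decomp j0 j => h.
apply: (@key j0); rewrite -[_ *: e j0](addrK y); exact: LEB h hy.
Qed.

End Proof.

Theorem corollary3p12 (K : numFieldType) (A : lmodType K) (mul : A -> A -> A)
  (L : eqType) (e : L -> A) (w : L -> L -> K)
  (HA : evolution_algebra mul e w) (M : A -> Prop) :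
  (maximal_modular_ideal mul M <->
     exists i0 : L, modular_index w i0 /\ (forall x, M x <-> lin_except e i0 x)) /\
  (forall i0 : L, modular_index w i0 -> (forall x, M x <-> lin_except e i0 x) ->
     modular_unit mul M ((w i0 i0)^-1 *: e i0)).
Proof.
case: HA => [[HmL HmR] [Hsp Hli Horth] Hsm].
split; first split.
- exact: forward.
- by case=> i0 [hi HM]; exact: (backward _ _ _ _ _ _ hi HM).
- by move=> i0 [wn _] HM; exact: (unit_lem _ _ _ _ _ wn HM).
Qed.
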